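(* Let $k \geq 2$ be an integer and let $G=(V,E)$ be a $k$-connected graph with $n \geq 3$ vertices, $e$ edges, minimum degree $\delta$ and maximum degree $\Delta$. If any one of the following five conditions holds, then $G$ is Hamiltonian: [1] $$Z_1(G) \geq (n - k - 1)\Delta^2 + \frac{e^2}{2(k + 1)} + \frac{(k + 1) \Delta^3}{2 \delta};$$ [2] $$F(G) \leq (n - k - 1) \delta^3 + \frac{\delta (2 (k + 1)^2 \delta^2 - e^2)}{k + 1};$$ [3] $$F(G) \leq (n - k - 1) \delta^3 + \frac{\delta}{k + 1} \left( 2 (k + 1) \left((k + 1) \delta^2 + \frac{e^2}{n - k - 1}\right) - e^2 - 2 (k + 1) (n - k - 1) \Delta^2\right);$$ [4] $$Inv(G) \leq \frac{n - k - 1}{\Delta} + \frac{2 (k + 1)^2 \delta^2 - e^2}{(k + 1) \Delta^3};$$ [5] $$Inv(G) \leq \frac{n - k - 1}{\Delta} + \frac{1}{(k + 1) \Delta^3} \left( 2 (k + 1) \left((k + 1) \delta^2 + \frac{e^2}{n - k - 1}\right) - e^2 - 2 (k + 1) (n - k - 1) \Delta^2\right).$$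
   Context: Graphs are finite, undirected, without loops or multiple edges. $d(u)$ denotes the degree of vertex $u$; $\delta$ and $\Delta$ are the minimum and maximum degrees. The first Zagreb index is $Z_1(G)=\sum_{u\in V} d(u)^2$, the forgotten topological index is $F(G)=\sum_{u\in V} d(u)^3$, and the inverse degree is $Inv(G)=\sum_{u\in V}\frac{1}{d(u)}$. A graph is Hamiltonian if it has a cycle containing all its vertices. *)

(* Defs.v *)
From mathcomp Require Import all_boot all_order all_algebra.
Set Implicit Arguments. Unset Strict Implicit. Unset Printing Implicit Defensive.
Import Order.TTheory GRing.Theory Num.Theory.

Section Graphs.
Variable T : finType.
Variable g : rel T.

Definition simple_graph : Prop := symmetric g /\ irreflexive g.

Definition deg (x : T) : nat := #|[set y | g x y]|.

Definition edge_set : {set {set T}} := [set [set x; y] | x in T, y in T & g x y].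
Definition nedges : nat := #|edge_set|.

(* maximum and minimum degree (for nonempty T; #|T| exceeds every degree) *)
Definition maxdeg : nat := \max_(x : T) deg x.
Definition mindeg : nat := \big[minn/#|T|]_(x : T) deg x.

Definition induced_connected (S : {set T}) : Prop :=
  forall x y, x \in S -> y \in S ->
    connect [rel u v | [&& g u v, u \in S & v \in S]] x y.

Definition k_connected (k : nat) : Prop :=
  k < #|T| /\ forall S : {set T}, #|S| < k -> induced_connected (~: S).

Definition hamiltonian : Prop :=
  exists s : seq T, [/\ uniq s, 3 <= size s, (forall x, x \in s) & cycle g s].

Local Open Scope ring_scope.
Definition Zagreb1 (R : realFieldType) : R := \sum_(x : T) ((deg x)%:R) ^+ 2.
Definition forgotten (R : realFieldType) : R := \sum_(x : T) ((deg x)%:R) ^+ 3.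
Definition inv_degree (R : realFieldType) : R := \sum_(x : T) ((deg x)%:R)^-1.
End Graphs.

(* Main.v *)
Require Import Defs.
From mathcomp Require Import all_boot all_order all_algebra.
From mathcomp Require Import zify ring lra.
From Stdlib Require Import Classical.
Import Order.TTheory GRing.Theory Num.Theory.
Set Implicit Arguments. Unset Strict Implicit. Unset Printing Implicit Defensive.

Section SeqAux.
Variable T : eqType.
Lemma next_x (x y : T) p1 p2 : next (x :: p1 ++ y :: p2) x = head y p1.
Proof.
rewrite next_nth mem_head /= eqxx /=. by case: p1.
Qed.
Lemma next_y (x y : T) p1 p2 : uniq (x :: p1 ++ y :: p2) -> next (x :: p1 ++ y :: p2) y = head x p2.
Proof.
move=> U; rewrite next_nth !inE mem_cat inE eqxx !orbT /=.
have ny: (x == y) = false. by apply/negbTE; move: U => /= /andP[H _]; apply/eqP => E; move: H; rewrite E mem_cat inE eqxx orbT.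
have yp1: (y \in p1) = false. by move: U => /= /andP[_]; rewrite cat_uniq /= => /and3P[_ /norP[/negbTE -> _] _].
rewrite ny /= index_cat yp1 /= eqxx addn0 nth_cat ltnNge leqnSn /= subSn // subnn /=. by case: p2 {U}.
Qed.
End SeqAux.

Section G.
Variable T : finType.
Variable g : rel T.
Hypothesis gsym : symmetric g.
Hypothesis girr : irreflexive g.

Definition good (s : seq T) := [&& uniq s, 2 < size s & cycle g s].

Lemma surg1 x y B P : good (x :: y :: B) -> path g x (P ++ [:: y]) -> uniq P ->
  P != [::] -> (forall p, p \in P -> p \notin x :: y :: B) ->
  good (x :: P ++ y :: B) /\ size (x :: y :: B) < size (x :: P ++ y :: B).
Proof.
move=> /and3P[U Sz Cy] Pp UP Pn PC.
have Sz2 : size (x :: y :: B) < size (x :: P ++ y :: B).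
  have: 0 < size P by case: P Pn {Pp UP PC}.
  rewrite /= size_cat /=; lia.
split=> //; apply/and3P; split.
- have: uniq ((x :: y :: B) ++ P).
    rewrite cat_uniq U UP andbT; apply/hasPn => z /PC; done.
  suff Pm: perm_eq ((x :: y :: B) ++ P) (x :: P ++ y :: B) by rewrite (perm_uniq Pm).
  apply/permP => f; rewrite /= !count_cat /=; lia.
- by apply: leq_trans Sz2.
- move: Cy; rewrite /= rcons_cat /= => /andP[gxy PB].
  have ->: P ++ y :: rcons B x = (P ++ [:: y]) ++ rcons B x by rewrite -catA.
  by rewrite cat_path Pp last_cat /=.
Qed.

Lemma rpath a A y : path g a (rcons A y) -> path g y (rev (a :: A)).
Proof.
move=> H; have := rev_path g a (rcons A y).
rewrite last_rcons belast_rcons => ->.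
rewrite (@eq_path _ _ g) //; move=> u w /=; exact: gsym.
Qed.

Lemma surg3 x a0 A y b0 B P Q : good (x :: a0 :: A ++ y :: b0 :: B) ->
  path g x (P ++ [:: y]) -> uniq P -> P != [::] ->
  (forall p, p \in P -> p \notin x :: a0 :: A ++ y :: b0 :: B) ->
  path g a0 (Q ++ [:: b0]) -> uniq Q ->
  (forall q, q \in Q -> (q \notin x :: a0 :: A ++ y :: b0 :: B) && (q \notin P)) ->
  exists D, good D /\ size (x :: a0 :: A ++ y :: b0 :: B) < size D.
Proof.
set C := x :: a0 :: A ++ y :: b0 :: B.
move=> /and3P[U Sz Cy] Pp UP Pn PC Qp UQ QC.
exists (x :: P ++ y :: rev (a0 :: A) ++ Q ++ b0 :: B).
have Pm : perm_eq (C ++ P ++ Q) (x :: P ++ y :: rev (a0 :: A) ++ Q ++ b0 :: B).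
  apply/permP => f; rewrite /C /= !count_cat /= !count_cat /=; rewrite rev_cons -cats1 count_cat count_rev /=; lia.
have Sz2 : size C < size (C ++ P ++ Q).
  have: 0 < size P by case: P Pn {Pp UP PC Pm QC}.
  rewrite !size_cat; lia.
rewrite -(perm_size Pm); split=> //; apply/and3P; split.
- rewrite -(perm_uniq Pm) cat_uniq U cat_uniq UP UQ /= andbT; apply/andP; split.
    by apply/hasPn => z; rewrite mem_cat => /orP[/PC|/QC/andP[]].
  by apply/hasPn => z /QC /andP[].
- by rewrite -(perm_size Pm); apply: leq_trans Sz2.
- move: Cy; rewrite /C /= rcons_cat /= => /andP[gxa].
  rewrite -cat_rcons cat_path last_rcons /= => /and3P[pA gyb pB].
  have ->: rcons (P ++ y :: rev (a0 :: A) ++ Q ++ b0 :: B) x =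
    (P ++ [:: y]) ++ (rev (a0 :: A)) ++ (Q ++ [:: b0]) ++ rcons B x.
    by rewrite -!cats1 -!catA /= -!catA.
  rewrite cat_path Pp /= last_cat /= cat_path (rpath pA) /= rev_cons last_rcons.
  by rewrite cat_path Qp last_cat /= pB.
Qed.


Definition indep (I : {set T}) := forall a b, a \in I -> b \in I -> ~~ g a b.
Definition PS (A : {set T}) := [set p : T * T | (p.1 \in A) && g p.1 p.2].

Lemma sum_deg (A : {set T}) : \sum_(x in A) deg g x = #|PS A|.
Proof.
rewrite -sum1_card.
rewrite (eq_bigl (fun p : T * T => (p.1 \in A) && g p.1 p.2)); last by move=> p; rewrite inE.
rewrite -(pair_big_dep (fun x => x \in A) (fun x y => g x y) (fun _ _ => 1)) /=.
apply: eq_bigr => x _; rewrite /deg -sum1_card; apply: eq_bigl => y; by rewrite inE.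
Qed.

Definition f2 (p : T * T) : {set T} := [set p.1; p.2].

Lemma f2_edge p : g p.1 p.2 -> f2 p \in edge_set g.
Proof. move=> H; apply/imset2P; exists p.1 p.2 => //; by rewrite ?inE ?H. Qed.

Lemma edgeP E : E \in edge_set g -> exists a b, g a b /\ E = [set a; b].
Proof. case/imset2P=> a b _; rewrite inE => H ->; by exists a, b. Qed.

Lemma cntI I : indep I -> \sum_(x in I) deg g x <= nedges g /\
  ((exists a b, [/\ g a b, a \notin I & b \notin I]) -> \sum_(x in I) deg g x < nedges g).
Proof.
move=> Ind; rewrite sum_deg.
have inj : {in PS I &, injective f2}.
  move=> [a b] [a' b']; rewrite !inE /= /f2 /= => /andP[aI gab] /andP[aI' gab'] E.
  have bI : b \notin I by apply: contraL aI' => bI; move: (Ind _ _ aI bI); rewrite gab.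
  have bI' : b' \notin I by apply: contraL aI => bI2; move: (Ind _ _ aI' bI2); rewrite gab'.
  have: a \in [set a'; b'] by rewrite -E !inE eqxx.
  rewrite !inE => /orP[/eqP ea|/eqP eb]; last by move: bI'; rewrite -eb aI.
  subst a'.
  have: b \in [set a; b'] by rewrite -E !inE eqxx orbT.
  rewrite !inE => /orP[/eqP eb|/eqP -> //]; by move: gab; rewrite eb girr.
have sub : f2 @: PS I \subset edge_set g.
  apply/subsetP => E /imsetP[p]; rewrite inE => /andP[_ gp] ->; exact: f2_edge.
rewrite -(card_in_imset inj); split; first exact: subset_leq_card.
move=> [a [b [gab aI bI]]]; apply: proper_card; rewrite properE sub /=.
apply/subsetPn; exists [set a; b]; first by apply: (f2_edge (p := (a, b))).
apply/imsetP => [[p]]; rewrite inE => /andP[pI _] E.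
have: p.1 \in [set a; b] by rewrite E /f2 !inE eqxx.
by rewrite !inE => /orP[/eqP E1|/eqP E1]; move: pI; rewrite E1 ?(negbTE aI) ?(negbTE bI).
Qed.

Lemma cntJ I : indep I -> nedges g <= \sum_(x in ~: I) deg g x.
Proof.
move=> Ind; rewrite sum_deg; apply: leq_trans (leq_imset_card f2 _).
apply: subset_leq_card; apply/subsetP => E /edgeP [a [b [gab ->]]].
case aI: (a \in I).
  have bI : b \notin I by apply/negP => bI; move: (Ind _ _ aI bI); rewrite gab.
  apply/imsetP; exists (b, a); first by rewrite inE /= inE bI gsym.
  by rewrite /f2 /= setUC.
apply/imsetP; exists (a, b) => //; by rewrite inE /= inE aI.
Qed.

Lemma path_all (e : rel T) (P : pred T) a p : (forall u w, P u -> e u w -> P w) ->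
  P a -> path e a p -> all P p.
Proof.
move=> HP; elim: p a => [|b p IH] a //= Pa /andP[eab pp].
have Pb := HP _ _ Pa eab; by rewrite Pb (IH b).
Qed.

Lemma first_step (e : rel T) x p : path e x p -> x != last x p -> exists u, e x u /\ u \in p.
Proof. case: p => [|u p] /=; first by rewrite eqxx. move=> /andP[exu _] _; exists u; by rewrite mem_head. Qed.

Lemma mindeg_le x : mindeg g <= deg g x.
Proof.
rewrite /mindeg; have: x \in index_enum T by rewrite mem_index_enum.
elim: (index_enum T) => [|a r IH] //; rewrite inE big_cons => /orP[/eqP <-|/IH H].
  exact: geq_minl.
by rewrite geq_min H orbT.
Qed.

Lemma maxdeg_ge x : deg g x <= maxdeg g.
Proof. exact: leq_bigmax. Qed.

Variable k : nat.
Hypothesis hk2 : (2 <= k)%N.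
Hypothesis kc : k_connected g k.
Hypothesis hn : (3 <= #|T|)%N.

Definition relS (S : {set T}) := [rel u w | [&& g u w, u \in S & w \in S]].

Lemma sepC (S : {set T}) x y : #|S| < k -> x \notin S -> y \notin S -> connect (relS (~: S)) x y.
Proof. move=> HS xS yS; case: kc => _ /(_ S HS); apply; by rewrite inE. Qed.

Lemma neighb_out (S : {set T}) x y : #|S| < k -> x \notin S -> y \notin S -> x != y ->
  exists u, g x u /\ u \notin S.
Proof.
move=> HS xS yS nxy; case/connectP: (sepC HS xS yS) => p pp ey.
case: (first_step pp) => [|u [/and3P[gxu _ uS] _]]; first by rewrite -ey.
by exists u; move: uS; rewrite inE.
Qed.

Lemma deg2 x : 2 <= deg g x.
Proof.
have [y yx] : exists y, y \in [set~ x].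
  apply/card_gt0P; rewrite cardsC1; lia.
have [u [gxu _]] : exists u, g x u /\ u \notin (set0 : {set T}).
  apply: (@neighb_out set0 x y); rewrite ?cards0 ?inE //; first lia.
  by move: yx; rewrite !inE eq_sym.
have [z zxu] : exists z, z \in ~: [set x; u].
  apply/card_gt0P; have := cardsC [set x; u]; rewrite cards2; lia.
have xu : x != u by apply/eqP => E; move: gxu; rewrite E girr.
have [u' [gxu' u'u]] : exists u', g x u' /\ u' \notin [set u].
  apply: (@neighb_out [set u] x z); rewrite ?cards1; first lia.
  - by rewrite inE.
  - by move: zxu; rewrite !inE negb_or => /andP[].
  - by move: zxu; rewrite !inE negb_or eq_sym => /andP[].
apply/card_gt1P; exists u, u'; rewrite !inE gxu gxu'; split=> //.
by move: u'u; rewrite inE eq_sym.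
Qed.

Lemma relS_path (S : {set T}) a p : path (relS S) a p -> path g a p.
Proof. apply: sub_path => u w /and3P[]. done. Qed.

Lemma init_cycle : exists C, good C.
Proof.
have [x _] : exists x, x \in [set: T] by apply/card_gt0P; rewrite cardsT; lia.
have /card_gt1P [y [z [yN zN yz]]] := deg2 x.
move: yN zN; rewrite !inE => gxy gxz.
have xy : y \notin [set x] by rewrite inE; apply/eqP => E; move: gxy; rewrite E girr.
have xz : z \notin [set x] by rewrite inE; apply/eqP => E; move: gxz; rewrite E girr.
have := @sepC [set x] y z; rewrite cards1 => /(_ ltac:(lia) xy xz) /connectP [p pp ez].
case/shortenP: pp ez => p' pp' Up' _ ez.
exists [:: x, y & p']; apply/and3P; split.
- rewrite cons_uniq Up' andbT inE negb_or; apply/andP; split; first by move: xy; rewrite inE eq_sym.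
  apply/negP => xp'.
  have := path_all (P := fun w => w \in ~: [set x]) _ _ pp'.
  move=> /(_ ltac:(by move=> u w _ /and3P[])) /(_ ltac:(by rewrite inE)) /allP /(_ _ xp').
  by rewrite !inE eqxx.
- case: p' {pp' Up'} ez => [|? ?] /=; last by [].
  by move=> E; move: yz; rewrite E eqxx.
- rewrite /= gxy /= rcons_path (relS_path pp') -ez gsym; done.
Qed.

Definition cert := exists I : {set T},
  [/\ indep I, k < #|I| & (mindeg g < maxdeg g \/ k.+1 * mindeg g < nedges g)].

Section Step.
Variables (C : seq T) (v : T).
Hypothesis goodC : good C.
Hypothesis vC : v \notin C.
Hypothesis NL : ~ exists D, good D /\ size C < size D.

Definition gC := [rel a b | [&& g a b, a \notin C & b \notin C]].
Definition H := [set u | connect gC v u].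
Definition S := [set x | (x \in C) && [exists h in H, g h x]].

Lemma uC : uniq C. Proof. by case/and3P: goodC. Qed.

Lemma H_notC u : u \in H -> u \notin C.
Proof.
rewrite inE => /connectP [p pp ->].
have := path_all (P := fun w => w \notin C) _ vC pp.
move=> /(_ ltac:(by move=> a b _ /and3P[])) Ap.
have := mem_last v p; rewrite inE => /orP[/eqP -> //|]; by move/(allP Ap).
Qed.

Lemma H_step a b : a \in H -> g a b -> b \notin C -> b \in H.
Proof.
move=> aH gab bC; have aC := H_notC aH; move: aH; rewrite !inE => cva.
apply: connect_trans cva (connect1 _); by rewrite /= gab aC bC.
Qed.

Lemma gC_sym : symmetric gC.
Proof. move=> a b /=; rewrite gsym; by case: (a \in C); case: (b \in C); rewrite ?andbF. Qed.

Lemma Hpath x y : x \in S -> y \in S ->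
  exists P, [/\ path g x (P ++ [:: y]), uniq P, P != [::] & forall p, p \in P -> p \in H].
Proof.
rewrite !inE => /andP[_ /existsP[h1 /andP[h1H g1]]] /andP[_ /existsP[h2 /andP[h2H g2]]].
have c12 : connect gC h1 h2.
  move: h1H h2H; rewrite !inE => c1 c2.
  by apply: connect_trans _ c2; rewrite (sym_connect_sym gC_sym).
case/connectP: c12 => p pp e2.
case/shortenP: pp e2 => p' pp' Up' _ e2.
exists (h1 :: p'); split => //.
- rewrite /= gsym g1 /= cats1 rcons_path -e2 g2 andbT.
  by apply: sub_path pp' => u w /and3P[].
- have := path_all (P := fun w => w \in H) _ h1H pp'.
  move=> /(_ ltac:(by move=> a b aH /and3P[gab _ bC]; apply: H_step aH gab bC)) /allP Ap.
  move=> q; rewrite inE => /orP[/eqP -> //|]; exact: Ap.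
Qed.

Lemma NL1 x : x \in S -> next C x \notin S.
Proof.
move=> xS; apply/negP => nS.
have xC : x \in C by move: xS; rewrite inE => /andP[].
case: (rot_to xC) => i s' Ei.
have goodR : good (rot i C) by rewrite /good rot_uniq size_rot rot_cycle.
have En : next C x = head x s' by rewrite -(next_rot i uC) Ei next_nth mem_head /= eqxx; case: s' {Ei goodR}.
case: s' Ei goodR En => [|y B] Ei goodR En.
  by move: goodR; rewrite Ei /good /=. 
have [P [Pp UP Pn PH]] := Hpath xS (y := y) ltac:(by rewrite En in nS).
apply: NL; rewrite Ei in goodR.
have [gD szD] := surg1 goodR Pp UP Pn ltac:(by move=> p /PH /H_notC; rewrite -Ei mem_rot).
exists (x :: P ++ y :: B); split => //; by rewrite -(size_rot i) Ei.
Qed.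

Lemma SC x : x \in S -> x \in C.
Proof. by rewrite inE => /andP[]. Qed.

Lemma NL3 x y Q : x \in S -> y \in S -> x != y ->
  path g (next C x) (Q ++ [:: next C y]) -> uniq Q ->
  (forall q, q \in Q -> (q \notin C) && (q \notin H)) -> False.
Proof.
move=> xS yS xy Qp UQ QCH.
case: (rot_to_arc uC (SC xS) (SC yS) xy) => i p1 p2 _ _ Ei.
have goodR : good (rot i C) by rewrite /good rot_uniq size_rot rot_cycle.
have UR : uniq (x :: p1 ++ y :: p2) by rewrite -Ei rot_uniq uC.
have Ex : next C x = head y p1 by rewrite -(next_rot i uC) Ei next_x.
have Ey : next C y = head x p2 by rewrite -(next_rot i uC) Ei next_y.
case: p1 Ei UR Ex => [|a0 A] Ei UR Ex.
  by move: (NL1 xS); rewrite Ex /= yS.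
case: p2 Ei UR Ey => [|b0 B] Ei UR Ey.
  by move: (NL1 yS); rewrite Ey /= xS.
rewrite Ex Ey /= in Qp.
have [P [Pp UP Pn PH]] := Hpath xS yS.
rewrite Ei in goodR.
have memC z : (z \in x :: (a0 :: A) ++ y :: b0 :: B) = (z \in C) by rewrite -Ei mem_rot.
apply: NL; have [D [gD szD]] := surg3 goodR Pp UP Pn
   ltac:(by move=> p /PH /H_notC; rewrite memC) Qp UQ
   ltac:(move=> q /QCH /andP[qC qH]; rewrite memC qC /=; apply/negP => /PH; exact/negP).
exists D; split => //; by rewrite -(size_rot i) Ei.
Qed.

Lemma S_big : k <= #|S|.
Proof.
rewrite leqNgt; apply/negP => Sk.
have [y [yC yS]] : exists y, y \in C /\ y \notin S.
  apply: NNPP => Hn.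
  have [c Ec] : exists c, c \in C by case/and3P: goodC; case: C => [|c ?] //; exists c; rewrite mem_head.
  have cS : c \in S by apply: NNPP => cS; apply: Hn; exists c; split => //; apply/negP.
  have := NL1 cS; apply/negP/negPn; apply: NNPP => nS; apply: Hn; exists (next C c).
  by rewrite mem_next Ec; split => //; apply/negP.
have vS : v \notin S by apply/negP => /SC; apply/negP.
case/connectP: (sepC Sk vS yS) => p pp ey.
have stp : forall a b, a \in H -> relS (~: S) a b -> b \in H.
  move=> a b aH /and3P[gab _]; rewrite inE => bS.
  have bC : b \notin C.
    apply/negP => bC; move/negP: bS; apply; rewrite inE bC /=; apply/existsP; exists a; by rewrite aH gab.
  exact: H_step aH gab bC.
have := path_all (P := fun w => w \in H) stp _ pp.
move=> /(_ ltac:(by rewrite inE connect0)) /allP Ap.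
have : y \in H.
  have := mem_last v p; rewrite -ey inE => /orP[/eqP ->|/Ap //]; by rewrite inE connect0.
by move/H_notC; rewrite yC.
Qed.

Definition I0 := v |: [set next C x | x in S].

Lemma I0_card : #|I0| = #|S|.+1.
Proof.
rewrite cardsU1 card_imset; last exact: (can_inj (prev_next uC)).
suff -> : v \notin [set next C x | x in S] by [].
apply/imsetP => [[x xS E]]; move: vC; by rewrite E mem_next (SC xS).
Qed.

Lemma I0P u : u \in I0 -> u = v \/ exists2 x, x \in S & u = next C x.
Proof. rewrite !inE => /orP[/eqP ->|/imsetP[x xS ->]]; [left|right] => //; by exists x. Qed.

Lemma vnext x : x \in S -> ~~ g v (next C x).
Proof.
move=> xS; apply/negP => gv; move: (NL1 xS); rewrite inE mem_next (SC xS) /=.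
by move/negP; apply; apply/existsP; exists v; rewrite gv inE connect0.
Qed.

Lemma I0_indep : indep I0.
Proof.
move=> a b /I0P [->|[x xS ->]] /I0P [->|[y yS ->]].
- by rewrite girr.
- exact: vnext.
- rewrite gsym; exact: vnext.
- case: (eqVneq x y) => [->|xy]; first by rewrite girr.
  apply/negP => gxy; apply: (NL3 (Q := [::]) xS yS xy) => //=; by rewrite gxy.
Qed.

Lemma step_cert : cert.
Proof.
have Ind := I0_indep. have Sk := S_big.
have d2 : 2 <= mindeg g.
  rewrite /mindeg; apply: (big_ind (fun m => 2 <= m)) => //; first by lia.
  - by move=> a b; rewrite leq_min => -> ->.
  - by move=> x _; exact: deg2.
have Ad : #|I0| * mindeg g <= \sum_(x in I0) deg g x.
  rewrite -sum_nat_const; apply: leq_sum => x _; exact: mindeg_le.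
have [Ae Astrict] := cntI Ind.
exists I0; split => //; first by rewrite I0_card ltnS.
case: (ltnP (mindeg g) (maxdeg g)) => [lt|geDd]; first by left.
right.
have reg : forall x, deg g x = mindeg g.
  move=> x; apply/eqP; rewrite eqn_leq mindeg_le andbT.
  by apply: leq_trans (maxdeg_ge x) geDd.
case: (ltnP k #|S|) => [kS|Sk'].
  have : k.+1 * mindeg g < #|I0| * mindeg g by rewrite ltn_pmul2r ?I0_card; lia.
  lia.
have eS : #|S| = k by apply/eqP; rewrite eqn_leq Sk' Sk.
case: (classic (exists a b, [/\ g a b, a \notin I0 & b \notin I0])) => [Av|NAv].
  have := Astrict Av; rewrite I0_card eS in Ad; lia.
exfalso.
have NA : forall a b, g a b -> a \notin I0 -> b \in I0.
  move=> a b gab aI; apply: NNPP => bI; apply: NAv; exists a, b; split => //; exact/negP.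
have J := cntJ Ind.
rewrite (eq_bigr (fun _ => mindeg g)) ?sum_nat_const in J; last by move=> x _; exact: reg.
have cJ : #|I0| <= #|~: I0|.
  rewrite -(@leq_pmul2r (mindeg g)); last by lia.
  exact: leq_trans Ad (leq_trans Ae J).
have [w wI wS] : exists2 w, w \in ~: I0 & w \notin S.
  apply: NNPP => Hn.
  have : ~: I0 \subset S.
    apply/subsetP => w wI; apply: NNPP => wS; apply: Hn; exists w => //; exact/negP.
  move/subset_leq_card; rewrite eS; move: cJ; rewrite I0_card eS; lia.
rewrite inE in wI.
have nxt_inj := can_inj (prev_next uC).
case wC: (w \in C).
  have gwz : g w (next C w) by apply: next_cycle => //; case/and3P: goodC.
  case: (I0P (NA _ _ gwz wI)) => [E|[x xS E]].
    by move: vC; rewrite -E mem_next wC.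
  by move: wS; rewrite (nxt_inj _ _ E) xS.
have /card_gt1P [u1 [u2 [u1N u2N u12]]] := deg2 w.
move: u1N u2N; rewrite !inE => g1 g2.
case wH: (w \in H).
  have hw : forall u, g w u -> u \in I0 -> u <> v -> False.
    move=> u gu /I0P [//|[x xS E]] _.
    have := NL1 xS; rewrite inE mem_next (SC xS) /= -E; move/negP; apply.
    by apply/existsP; exists w; rewrite wH gu.
  case: (eqVneq u1 v) => [E1|n1].
    apply: (hw u2 g2 (NA _ _ g2 wI)) => E2; move: u12; by rewrite E1 E2 eqxx.
  exact: (hw u1 g1 (NA _ _ g1 wI) (elimN eqP n1)).
have hw : forall u, g w u -> exists2 x, x \in S & u = next C x.
  move=> u gu; case: (I0P (NA _ _ gu wI)) => // E.
  have : w \in H by apply: (H_step (a := v)); [rewrite inE connect0 | rewrite gsym -E | rewrite wC].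
  by rewrite wH.
have [x1 x1S E1] := hw _ g1. have [x2 x2S E2] := hw _ g2.
have x12 : x1 != x2 by apply/eqP => E; move: u12; rewrite E1 E2 E eqxx.
apply: (NL3 (Q := [:: w]) x1S x2S x12) => /=.
- by rewrite -E1 -E2 gsym g1 g2.
- done.
- by move=> q; rewrite inE => /eqP ->; rewrite wC wH.
Qed.

End Step.

Lemma good_size C : good C -> size C <= #|T|.
Proof. case/and3P => U _ _; rewrite -(card_uniqP U); exact: max_card. Qed.

Lemma step_or C : good C ->
  [\/ hamiltonian g, cert | exists D, good D /\ size C < size D].
Proof.
move=> gC.
case: (classic (forall x, x \in C)) => [All|NAll].
  apply: Or31; exists C; case/and3P: gC => U sz cy; split => //.
case: (classic (exists D, good D /\ size C < size D)) => [Ex|NL]; first exact: Or33.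
have [v vC] : exists v, v \notin C.
  apply: NNPP => Hn; apply: NAll => x; apply: NNPP => xC; apply: Hn; exists x; exact/negP.
apply: Or32; exact: (step_cert gC vC NL).
Qed.

Lemma ham_or_cert : hamiltonian g \/ cert.
Proof.
have [C0 g0] := init_cycle.
suff H : forall N C, good C -> #|T| - size C <= N -> hamiltonian g \/ cert.
  exact: (H #|T| C0 g0 (leq_subr _ _)).
elim=> [|N IH] C gC sz; case: (step_or gC) => [h|c|[D [gD lt]]]; try by [left|right].
  have := good_size gD; lia.
apply: (IH D gD); lia.
Qed.
Lemma T_nonempty : exists x : T, true.
Proof. have [x _] : exists x, x \in [set: T] by apply/card_gt0P; rewrite cardsT; lia. by exists x. Qed.

Lemma mindeg2 : 2 <= mindeg g.
Proof.
rewrite /mindeg; apply: (big_ind (fun m => 2 <= m)) => //; first by lia.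
- by move=> a b; rewrite leq_min => -> ->.
- by move=> x _; exact: deg2.
Qed.

Lemma min_max : mindeg g <= maxdeg g.
Proof. have [x _] := T_nonempty; exact: leq_trans (mindeg_le x) (maxdeg_ge x). Qed.

Lemma Zbound (I : {set T}) : \sum_x deg g x ^ 2 <=
   maxdeg g * \sum_(x in I) deg g x + #|~: I| * maxdeg g ^ 2.
Proof.
rewrite (bigID (fun x => x \in I)) /=; apply: leq_add.
  rewrite big_distrr /=; apply: leq_sum => x _; rewrite expnS expn1 leq_mul2r maxdeg_ge orbT //.
rewrite -sum_nat_const [X in _ <= X](eq_bigl (fun x => x \notin I)); last by move=> x; rewrite inE.
apply: leq_sum => x _; rewrite leq_exp2r //; exact: maxdeg_ge.
Qed.

Lemma Fbound : maxdeg g ^ 3 + (#|T| - 1) * mindeg g ^ 3 <= \sum_x deg g x ^ 3.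
Proof.
have [x0 _] := T_nonempty.
have [x1 Ex1] : exists x1, maxdeg g = deg g x1.
  by exists [arg max_(i > x0) deg g i]; rewrite /maxdeg (bigop.bigmax_eq_arg x0).
rewrite (bigD1 x1) //= Ex1 leq_add2l.
have -> : #|T| - 1 = #|[pred x | x != x1]| by rewrite cardC1; lia.
rewrite -sum_nat_const; apply: leq_sum => x _; rewrite leq_exp2r //; exact: mindeg_le.
Qed.

Lemma Vbound (R : realFieldType) : (#|T|%:R / (maxdeg g)%:R <= inv_degree g R)%R.
Proof.
rewrite /inv_degree mulr_natl -sumr_const.
apply: ler_sum => x _.
have h1 : (0 < (deg g x)%:R :> R)%R by rewrite ltr0n; have := deg2 x; lia.
have h2 : (0 < (maxdeg g)%:R :> R)%R by rewrite ltr0n; have := deg2 x; have := maxdeg_ge x; lia.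
by rewrite lef_pV2 ?posrE // ler_nat maxdeg_ge.
Qed.

End G.

Section Arith.
Local Open Scope ring_scope.


Lemma arith (R : realFieldType) (n e d D kk p A Z F V : R) :
  2 <= kk -> kk + 1 <= p -> 2 <= d -> d <= D -> p * d <= A -> A <= e ->
  e <= (n - p) * D -> Z <= D * A + (n - p) * D ^+ 2 ->
  D ^+ 3 + (n - 1) * d ^+ 3 <= F -> n / D <= V ->
  (d < D \/ (kk + 1) * d < e) ->
  ~ ( (Z >= (n - kk - 1) * D ^+ 2 + e ^+ 2 / (2 * (kk + 1))
                      + (kk + 1) * D ^+ 3 / (2 * d)) \/
      (F <= (n - kk - 1) * d ^+ 3
                      + d * (2 * (kk + 1) ^+ 2 * d ^+ 2 - e ^+ 2) / (kk + 1)) \/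
      (F <= (n - kk - 1) * d ^+ 3
                      + d / (kk + 1) * (2 * (kk + 1) * ((kk + 1) * d ^+ 2
                            + e ^+ 2 / (n - kk - 1)) - e ^+ 2
                            - 2 * (kk + 1) * (n - kk - 1) * D ^+ 2)) \/
      (V <= (n - kk - 1) / D
                      + (2 * (kk + 1) ^+ 2 * d ^+ 2 - e ^+ 2) / ((kk + 1) * D ^+ 3)) \/
      (V <= (n - kk - 1) / D
                      + ((kk + 1) * D ^+ 3)^-1 * (2 * (kk + 1) * ((kk + 1) * d ^+ 2
                            + e ^+ 2 / (n - kk - 1)) - e ^+ 2
                            - 2 * (kk + 1) * (n - kk - 1) * D ^+ 2)) ).
Proof.
move=> hk hp hd hdD hA hAe heD hZ hF hV hs.
set K := kk + 1 in hp hs *.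
set m := n - kk - 1.
have hK : 3 <= K by rewrite /K; lra.
have d0 : 0 < d by lra.
have D0 : 0 < D by lra.
have K0 : 0 < K by lra.
have heK : K * d <= e by nra.
have hnm : n - p <= m by rewrite /m; move: hp; rewrite /K; lra.
have hemD : e <= m * D by nra.
have m0 : 0 < m.
  have Kd0 : 0 < K * d by rewrite mulr_gt0.
  have hmD : 0 < m * D by lra.
  by rewrite pmulr_lgt0 in hmD.
have hZ' : Z <= D * e + m * D ^+ 2 by nra.
have e0 : 0 <= e by nra.
have he2 : e ^+ 2 / m <= m * D ^+ 2.
  rewrite ler_pdivrMr //; nra.
have d0' : d != 0 by rewrite lt0r_neq0.
have D0' : D != 0 by rewrite lt0r_neq0.
have K0' : K != 0 by rewrite lt0r_neq0.
have m0' : m != 0 by rewrite lt0r_neq0.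
have str : (0 < D - d) \/ (d = D /\ K * D < e).
  case: hs => [h|h]; first by left; lra.
  case: (ltrP d D) => h2; first by left; lra.
  right; split; [lra | nra].
have S1 : D * e < e ^+ 2 / (2 * K) + K * D ^+ 3 / (2 * d).
  have E : e ^+ 2 / (2 * K) + K * D ^+ 3 / (2 * d) - D * e =
     ((e - K * D) ^+ 2 * d + K ^+ 2 * D ^+ 2 * (D - d)) / (2 * K * d).
    field; by rewrite ?mulf_neq0 ?d0' ?K0' ?pnatr_eq0.
  suff : 0 < ((e - K * D) ^+ 2 * d + K ^+ 2 * D ^+ 2 * (D - d)) / (2 * K * d) by lra.
  apply: divr_gt0; last by rewrite !mulr_gt0.
  case: str => [h|[h1 h2]].
    have : 0 < K ^+ 2 * D ^+ 2 * (D - d) by rewrite !mulr_gt0 ?exprn_gt0.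
    have : 0 <= (e - K * D) ^+ 2 * d by rewrite mulr_ge0 ?sqr_ge0 ?ltW.
    lra.
  have : 0 < (e - K * D) ^+ 2 * d by rewrite mulr_gt0 // exprn_even_gt0 //= subr_eq0 gt_eqF.
  rewrite h1 subrr mulr0 addr0; lra.
have S2 : m * d ^+ 3 + d * (2 * K ^+ 2 * d ^+ 2 - e ^+ 2) / K < F.
  have E : d * (2 * K ^+ 2 * d ^+ 2 - e ^+ 2) / K = 2 * K * d ^+ 3 - d * (e ^+ 2 / K).
    by field.
  have E2 : e ^+ 2 / K = K * d ^+ 2 + (e ^+ 2 - K ^+ 2 * d ^+ 2) / K by field.
  have pe : 0 <= e ^+ 2 - K ^+ 2 * d ^+ 2.
    have Kd0 : 0 <= K * d by rewrite mulr_ge0 ?ltW.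
    nra.
  have hD3 : d ^+ 3 <= D ^+ 3 by rewrite ler_pXn2r // ?nnegrE ?ltW.
  have Fn : F >= m * d ^+ 3 + K * d ^+ 3 + (D ^+ 3 - d ^+ 3) by move: hF; rewrite /m /K; lra.
  rewrite E E2.
  case: str => [h|[h1 h2]].
    have : d ^+ 3 < D ^+ 3 by rewrite ltr_pXn2r // ?nnegrE ?ltW //; lra.
    have : 0 <= d * ((e ^+ 2 - K ^+ 2 * d ^+ 2) / K) by apply: mulr_ge0; [lra | apply: divr_ge0; lra].
    have -> : d * (K * d ^+ 2 + (e ^+ 2 - K ^+ 2 * d ^+ 2) / K) = K * d ^+ 3 + d * ((e ^+ 2 - K ^+ 2 * d ^+ 2) / K).
      by rewrite exprS; ring.
    lra.
  have : 0 < d * ((e ^+ 2 - K ^+ 2 * d ^+ 2) / K).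
    have Kd0 : 0 <= K * d by rewrite mulr_ge0 ?ltW.
    rewrite mulr_gt0 ?divr_gt0 // subr_gt0; nra.
  rewrite -h1 subrr addr0 in Fn.
  have -> : d * (K * d ^+ 2 + (e ^+ 2 - K ^+ 2 * d ^+ 2) / K) = K * d ^+ 3 + d * ((e ^+ 2 - K ^+ 2 * d ^+ 2) / K).
    by rewrite exprS; ring.
  lra.
have S3 : d / K * (2 * K * (K * d ^+ 2 + e ^+ 2 / m) - e ^+ 2 - 2 * K * m * D ^+ 2)
          <= d * (2 * K ^+ 2 * d ^+ 2 - e ^+ 2) / K.
  have E : d / K * (2 * K * (K * d ^+ 2 + e ^+ 2 / m) - e ^+ 2 - 2 * K * m * D ^+ 2)
     = d * (2 * K ^+ 2 * d ^+ 2 - e ^+ 2) / K + 2 * d * (e ^+ 2 / m - m * D ^+ 2).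
    by field; rewrite m0' K0'.
  rewrite E; have : 0 <= 2 * d * (m * D ^+ 2 - e ^+ 2 / m) by apply: mulr_ge0; [apply: mulr_ge0; lra | rewrite subr_ge0].
  lra.
have S4 : (2 * K ^+ 2 * d ^+ 2 - e ^+ 2) / (K * D ^+ 3) < K / D.
  have E : K / D - (2 * K ^+ 2 * d ^+ 2 - e ^+ 2) / (K * D ^+ 3) =
    (K ^+ 2 * (D ^+ 2 - d ^+ 2) + (e ^+ 2 - K ^+ 2 * d ^+ 2)) / (K * D ^+ 3).
    by field; rewrite ?mulf_neq0 ?expf_neq0 ?K0' ?D0' ?m0'.
  suff : 0 < (K ^+ 2 * (D ^+ 2 - d ^+ 2) + (e ^+ 2 - K ^+ 2 * d ^+ 2)) / (K * D ^+ 3) by lra.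
  apply: divr_gt0; last by rewrite mulr_gt0 ?exprn_gt0.
  have pe : 0 <= e ^+ 2 - K ^+ 2 * d ^+ 2.
    have Kd0 : 0 <= K * d by rewrite mulr_ge0 ?ltW.
    nra.
  case: str => [h|[h1 h2]].
    have : 0 < K ^+ 2 * (D ^+ 2 - d ^+ 2).
      rewrite mulr_gt0 ?exprn_gt0 // subr_gt0; nra.
    lra.
  have : 0 < e ^+ 2 - K ^+ 2 * d ^+ 2.
    have Kd0 : 0 <= K * d by rewrite mulr_ge0 ?ltW.
    rewrite subr_gt0; nra.
  rewrite h1 subrr mulr0; lra.
have S5 : ((K * D ^+ 3)^-1 * (2 * K * (K * d ^+ 2 + e ^+ 2 / m) - e ^+ 2 - 2 * K * m * D ^+ 2))
          <= (2 * K ^+ 2 * d ^+ 2 - e ^+ 2) / (K * D ^+ 3).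
  have E : (K * D ^+ 3)^-1 * (2 * K * (K * d ^+ 2 + e ^+ 2 / m) - e ^+ 2 - 2 * K * m * D ^+ 2)
     = (2 * K ^+ 2 * d ^+ 2 - e ^+ 2) / (K * D ^+ 3) + 2 / D ^+ 3 * (e ^+ 2 / m - m * D ^+ 2).
    by field; rewrite ?mulf_neq0 ?expf_neq0 ?K0' ?D0' ?m0'.
  have : 0 <= 2 / D ^+ 3 * (m * D ^+ 2 - e ^+ 2 / m).
    apply: mulr_ge0; last by rewrite subr_ge0.
    apply: divr_ge0; [lra | rewrite exprn_ge0 // ltW //].
  rewrite E.
  lra.
have Vn : m / D + K / D <= V.
  by move: hV; have -> : n / D = m / D + K / D by rewrite /m /K; field.
move=> [c|[c|[c|[c|c]]]].
- lra.
- lra.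
- lra.
- lra.
- lra.
Qed.

End Arith.

Local Open Scope ring_scope.

Theorem theorem2 (R : realFieldType) (T : finType) (g : rel T) (k : nat) :
  simple_graph g -> (2 <= k)%N -> k_connected g k -> (3 <= #|T|)%N ->
  let n : R := (#|T|)%:R in
  let e : R := (nedges g)%:R in
  let d : R := (mindeg g)%:R in
  let D : R := (maxdeg g)%:R in
  let kk : R := k%:R in
  ( (Zagreb1 g R >= (n - kk - 1) * D ^+ 2 + e ^+ 2 / (2 * (kk + 1))
                      + (kk + 1) * D ^+ 3 / (2 * d)) \/
      (forgotten g R <= (n - kk - 1) * d ^+ 3
                      + d * (2 * (kk + 1) ^+ 2 * d ^+ 2 - e ^+ 2) / (kk + 1)) \/
      (forgotten g R <= (n - kk - 1) * d ^+ 3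
                      + d / (kk + 1) * (2 * (kk + 1) * ((kk + 1) * d ^+ 2
                            + e ^+ 2 / (n - kk - 1)) - e ^+ 2
                            - 2 * (kk + 1) * (n - kk - 1) * D ^+ 2)) \/
      (inv_degree g R <= (n - kk - 1) / D
                      + (2 * (kk + 1) ^+ 2 * d ^+ 2 - e ^+ 2) / ((kk + 1) * D ^+ 3)) \/
      (inv_degree g R <= (n - kk - 1) / D
                      + ((kk + 1) * D ^+ 3)^-1 * (2 * (kk + 1) * ((kk + 1) * d ^+ 2
                            + e ^+ 2 / (n - kk - 1)) - e ^+ 2
                            - 2 * (kk + 1) * (n - kk - 1) * D ^+ 2)) ) ->
  hamiltonian g.
Proof.
move=> [gsym girr] hk kc hn n e d D kk conds.
case: (ham_or_cert gsym girr hk kc hn) => // [[I [Ind kI str]]].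
exfalso.
have [Ae _] := cntI girr Ind.
have J := cntJ gsym Ind.
have cI : #|~: I| = (#|T| - #|I|)%N by have := cardsC I; lia.
have np : n - #|I|%:R = (#|~: I|)%:R by rewrite cI natrB ?max_card.
have n1 : n - 1 = (#|T| - 1)%N%:R by rewrite natrB //; lia.
apply: (@arith R n e d D kk #|I|%:R (\sum_(x in I) deg g x)%N%:R (Zagreb1 g R) (forgotten g R) (inv_degree g R)) conds.
- by rewrite /kk ler_nat.
- by rewrite /kk natr1 ler_nat.
- by rewrite /d ler_nat (mindeg2 girr hk kc hn).
- by rewrite /d /D ler_nat (min_max g hk hn).
- rewrite /d -natrM ler_nat -sum_nat_const; apply: leq_sum => x _; exact: mindeg_le.
- by rewrite /e ler_nat.
- rewrite np /e /D -natrM ler_nat; apply: leq_trans J _.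
  rewrite -sum_nat_const; apply: leq_sum => x _; exact: maxdeg_ge.
- have -> : Zagreb1 g R = (\sum_x deg g x ^ 2)%N%:R.
    by rewrite /Zagreb1 natr_sum; apply: eq_bigr => x _; rewrite natrX.
  rewrite np /D -!natrX -!natrM -natrD ler_nat; exact: Zbound.
- have -> : forgotten g R = (\sum_x deg g x ^ 3)%N%:R.
    by rewrite /forgotten natr_sum; apply: eq_bigr => x _; rewrite natrX.
  rewrite n1 /D /d -!natrX -!natrM -natrD ler_nat; exact: Fbound.
- exact: (Vbound girr hk kc hn).
- case: str => [h|h]; [left; by rewrite /d /D ltr_nat | right].
  by rewrite /kk /d /e natr1 -natrM ltr_nat.
Qed.
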